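(* Let $G$, $k$, $\epsilon$, $M$ be as in the standing setting. Then $G$ contains none of the following configurations: (C1) a vertex $u$ with $d(u)\le 1$; (C2) a path $w_1u_1u_2w_2$ with $d(u_1)=d(u_2)=2$, $d(w_1)\le k-1$ and $d(w_2)\le k-2$; (C3) a vertex $u$ with $3\le d(u)\le M$ whose neighbors are $v_1,\dots,v_{d(u)-2},x,y$, where each $v_i$ has degree $2$ and its other neighbor $w_i$ satisfies $d(w_i)\le M$ (the $w_i$ need not be distinct from each other or from $x,y$), and $d(x)+d(y)\le k-M+2$.
   Context: Standing setting: let $0<\epsilon\le 1/20$, $M=6/\epsilon$, and let $k$ be an integer with $k\ge 3/\epsilon^2$ (so $k\ge 3M$). Let $G$ be a finite simple graph with $\Delta(G)\le k$ such that the square of $G$ is not list $(k+1)$-colorable, while the square of every proper subgraph of $G$ is list $(k+1)$-colorable. Here the square of a graph has the same vertex set, two distinct vertices being adjacent iff they are adjacent or have a common neighbor; it is list $(k+1)$-colorable if for every assignment of lists of $k+1$ colors to the vertices there is a proper coloring of the square from the lists. $d(v)$ denotes the degree of $v$ in $G$. *)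

(* Defs.v *)
From HB Require Import structures.
From mathcomp Require Import all_boot all_order all_algebra.
Set Implicit Arguments. Unset Strict Implicit. Unset Printing Implicit Defensive.
Import Order.TTheory GRing.Theory Num.Theory.

Definition simple_graph (T : finType) (e : rel T) : Prop :=
  symmetric e /\ irreflexive e.

Definition deg (T : finType) (e : rel T) (v : T) : nat := #|[set w | e v w]|.

Definition subgraph (T : finType) (e : rel T) (S : {set T}) (f : rel T) : Prop :=
  symmetric f /\ (forall u v, f u v -> e u v) /\
  (forall u v, f u v -> u \in S /\ v \in S).

Definition proper_subgraph (T : finType) (e : rel T) (S : {set T}) (f : rel T) : Prop :=
  subgraph e S f /\ (S != setT \/ exists u v, e u v && ~~ f u v).

Definition sq_adj (T : finType) (S : {set T}) (f : rel T) (u v : T) : bool :=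
  (u != v) && (f u v || [exists w in S, f u w && f w v]).

Definition sq_list_colorable (T : finType) (S : {set T}) (f : rel T) (n : nat) : Prop :=
  forall L : T -> seq nat,
    (forall v, v \in S -> uniq (L v) /\ size (L v) = n) ->
    exists c : T -> nat,
      (forall v, v \in S -> c v \in L v) /\
      (forall u v, u \in S -> v \in S -> sq_adj S f u v -> c u != c v).

(* Main.v *)
Require Import Defs.
From HB Require Import structures.
From mathcomp Require Import all_boot all_order all_algebra.
From mathcomp Require Import lra zify.
Set Implicit Arguments. Unset Strict Implicit. Unset Printing Implicit Defensive.
Import Order.TTheory GRing.Theory Num.Theory.
Section H.
Variables (T : finType) (e : rel T).
Hypothesis esym : symmetric e.

Definition nbr v := [set w | e v w].

Definition valid (L : T -> seq nat) (A : {set T}) (c : T -> nat) :=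
  (forall v, v \in A -> c v \in L v) /\
  (forall u v, u \in A -> v \in A -> sq_adj [set: T] e u v -> c u != c v).

Lemma sq_adj_sym u v : sq_adj [set: T] e u v -> sq_adj [set: T] e v u.
Proof.
rewrite /sq_adj eq_sym esym => /andP[-> /orP[->//|/existsP[w /and3P[_ h1 h2]]]].
apply/orP; right; apply/existsP; exists w; by rewrite in_setT /= esym h2 esym h1.
Qed.

Lemma card_bigcup_leq (I : finType) (P : pred I) (F : I -> {set T}) :
  #|\bigcup_(i | P i) F i| <= \sum_(i | P i) #|F i|.
Proof.
apply: (big_rec2 (fun x (y : {set T}) => #|y| <= x)); first by rewrite cards0.
move=> i y1 y2 _ H; apply: leq_trans (leq_add (leqnn _) H).
by rewrite cardsU leq_subr.
Qed.

Lemma sq_bound (A : {set T}) v :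
  #|[set w in A | sq_adj [set: T] e v w]| <=
  \sum_(a in nbr v) #|(a |: (nbr a :\ v)) :&: A|.
Proof.
apply: leq_trans (card_bigcup_leq _ _); apply: subset_leq_card.
apply/subsetP => w; rewrite inE => /andP[wA /andP[nvw /orP[evw|/existsP[a /and3P[_ h1 h2]]]]].
  apply/bigcupP; exists w; first by rewrite inE.
  by rewrite inE wA setU11.
apply/bigcupP; exists a; first by rewrite inE.
by rewrite !inE wA h2 andbT (eq_sym w v) nvw orbT.
Qed.

Lemma F_bound (A : {set T}) v a : e v a ->
  #|(a |: (nbr a :\ v)) :&: A| <= deg e a.
Proof.
move=> eva; apply: leq_trans (subset_leq_card (subsetIl _ _)) _.
have hv : v \in nbr a by rewrite inE esym.
rewrite cardsU1 /deg -/(nbr a) (cardsD1 v (nbr a)) hv.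
by rewrite leq_add2r leq_b1.
Qed.

Lemma F_bound_out (A : {set T}) v a : e v a -> a \notin A ->
  #|(a |: (nbr a :\ v)) :&: A| <= (deg e a).-1.
Proof.
move=> eva aA.
have -> : (a |: (nbr a :\ v)) :&: A = (nbr a :\ v) :&: A.
  apply/setP => z; rewrite !inE; case: (eqVneq z a) => [->|]; last by [].
  by rewrite (negbTE aA) !andbF.
apply: leq_trans (subset_leq_card (subsetIl _ _)) _.
have hv : v \in nbr a by rewrite inE esym.
by rewrite /deg -/(nbr a) (cardsD1 v (nbr a)) hv.
Qed.

Lemma deg2_of a b w : e w a -> e w b -> a != b -> 2 <= deg e w.
Proof.
move=> ha hb ab; rewrite /deg; have <- : #|[set a; b]| = 2 by rewrite cards2 ab.
apply: subset_leq_card; apply/subsetP => z; rewrite !inE.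
by case/orP => /eqP ->.
Qed.

Lemma deg3_of a b c w : e w a -> e w b -> e w c -> a != b -> a != c -> b != c ->
  3 <= deg e w.
Proof.
move=> ha hb hc ab ac bc; rewrite /deg.
have <- : #|c |: [set a; b]| = 3.
  by rewrite cardsU1 cards2 ab !inE negb_or !(eq_sym c) ac bc.
apply: subset_leq_card; apply/subsetP => z; rewrite !inE.
by case/or3P => /eqP ->.
Qed.

Lemma extend (L : T -> seq nat) k (A : {set T}) c v :
  uniq (L v) -> size (L v) = k.+1 -> valid L A c ->
  #|[set w in A | sq_adj [set: T] e v w]| <= k ->
  exists c', valid L (v |: A) c'.
Proof.
move=> uL sL [cL cP] hb.
set B := [set w in A | sq_adj [set: T] e v w].
set forb := map c (enum B).
case: (boolP (has (fun col => col \notin forb) (L v))) => [/hasP [col Hcol Hnot] | Hn]; last first.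
  have sub : {subset L v <= forb}.
    by move=> z Hz; have := hasPn Hn z Hz; rewrite negbK.
  have := uniq_leq_size uL sub; rewrite sL size_map -cardE => h.
  by have := leq_trans h hb; rewrite ltnn.
exists (fun z => if z == v then col else c z); split.
  move=> z; rewrite !inE; case: (eqVneq z v) => [->|_] //= zA.
  exact: cL.
move=> z1 z2; rewrite !inE.
have key : forall w, w \in A -> sq_adj [set: T] e v w -> col != c w.
  move=> w wA hw; apply: contraNneq Hnot => ->; apply: map_f.
  by rewrite mem_enum inE wA hw.
case: (eqVneq z1 v) => [->|n1]; case: (eqVneq z2 v) => [->|n2] //=.
- by move=> _ _; rewrite /sq_adj eqxx.
- by move=> _ h2 hs; apply: key.
- by move=> h1 _ /sq_adj_sym hs; rewrite eq_sym; apply: key.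
- by move=> h1 h2; apply: cP.
Qed.

Lemma extend_seq (L : T -> seq nat) k :
  (forall v, uniq (L v) /\ size (L v) = k.+1) ->
  forall (s : seq T) (A : {set T}) c, valid L A c ->
  (forall v, v \in s -> #|[set w | sq_adj [set: T] e v w]| <= k) ->
  exists c', valid L (A :|: [set z in s]) c'.
Proof.
move=> HL; elim=> [|v s IH] A c hv hb.
  exists c; have -> : A :|: [set z in ([::] : seq T)] = A.
    by apply/setP => z; rewrite !inE orbF.
  by [].
have [c1 hv1] : exists c1, valid L (v |: A) c1.
  have [u1 s1] := HL v; apply: (extend u1 s1 hv).
  apply: leq_trans (hb v (mem_head _ _)); apply: subset_leq_card.
  by apply/subsetP => z; rewrite !inE => /andP[].
have [c2 hv2] := IH _ _ hv1 (fun w hw => hb w ltac:(by rewrite inE hw orbT)).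
exists c2; have <- : (v |: A) :|: [set z in s] = A :|: [set z in v :: s] .
  apply/setP => z; rewrite !inE; by case: (z == v); rewrite ?orbT ?orbF.
by [].
Qed.

Definition restr (S : {set T}) : rel T := [rel a b | e a b && (a \in S) && (b \in S)].

Lemma start (L : T -> seq nat) k (S A0 : {set T}) :
  (forall S f, proper_subgraph e S f -> sq_list_colorable S f k) ->
  (forall v, uniq (L v) /\ size (L v) = k) ->
  S != setT -> A0 \subset S ->
  (forall a b w, a \in A0 -> b \in A0 -> a != b -> e a w -> e w b -> w \in S) ->
  exists c, valid L A0 c.
Proof.
move=> Hmin HL nS sub tr.
have ps : proper_subgraph e S (restr S).
  split; [split; [|split]|by left].
  - by move=> a b; rewrite /restr /= esym; case: (e b a); case: (a \in S); case: (b \in S).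
  - by move=> a b /= /andP[/andP[]].
  - by move=> a b /= /andP[/andP[_ ->] ->].
have [c [cL cP]] := Hmin _ _ ps L (fun v _ => HL v).
exists c; split.
  by move=> v vA; apply: cL; apply: (subsetP sub).
move=> a b aA bA /andP[nab /orP[eab|/existsP[w /and3P[_ h1 h2]]]].
  have aS := subsetP sub _ aA; have bS := subsetP sub _ bA.
  by apply: cP => //; rewrite /sq_adj /restr nab /= eab aS bS.
have aS := subsetP sub _ aA; have bS := subsetP sub _ bA.
have wS := tr _ _ _ aA bA nab h1 h2.
apply: cP => //; rewrite /sq_adj /restr nab /=; apply/orP; right; apply/existsP; exists w.
by rewrite /= h1 h2 aS bS wS.
Qed.

Lemma finish (L : T -> seq nat) (A : {set T}) c :
  (forall z, z \in A) -> valid L A c ->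
  exists c : T -> nat,
      (forall v, v \in [set: T] -> c v \in L v) /\
      (forall u v, u \in [set: T] -> v \in [set: T] -> sq_adj [set: T] e u v -> c u != c v).
Proof. by move=> hA [cL cP]; exists c; split=> [v _|u v _ _]; [apply: cL|apply: cP]. Qed.

End H.

Local Open Scope ring_scope.

Lemma eps_fact (eps : rat) (k : nat) : 0 < eps -> eps <= 1 / 20 ->
  3 / (eps ^+ 2) <= k%:R -> (6 / eps) *+ 2 <= (k%:R : rat).
Proof.
move=> e0 e20 hk; apply: le_trans hk.
have et : eps * eps^-1 = 1 by rewrite mulfV // gt_eqF.
have t0 : 0 < eps^-1 by rewrite invr_gt0.
rewrite -exprVn expr2 mulr2n.
move: et t0; set t := eps^-1 => et t0.
nra.
Qed.


Theorem lemma2 (eps : rat) (k : nat) (T : finType) (e : rel T) :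
  0 < eps -> eps <= 1 / 20 ->
  3 / (eps ^+ 2) <= k%:R ->
  simple_graph e ->
  (forall v, (deg e v <= k)%N) ->
  ~ sq_list_colorable [set: T] e k.+1 ->
  (forall S f, proper_subgraph e S f -> sq_list_colorable S f k.+1) ->
  let M : rat := 6 / eps in
  (* (C1) *)
  ~ (exists u, (deg e u <= 1)%N) /\
  (* (C2) *)
  ~ (exists w1 u1 u2 w2 : T,
       [/\ uniq [:: w1; u1; u2; w2], e w1 u1, e u1 u2 & e u2 w2] /\
       [/\ deg e u1 = 2%N, deg e u2 = 2%N,
           (deg e w1 + 1 <= k)%N & (deg e w2 + 2 <= k)%N]) /\
  (* (C3) *)
  ~ (exists u x y : T,
       [/\ (3 <= deg e u)%N, (deg e u)%:R <= M,
           x != y, e u x & e u y] /\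
       (forall v, e u v -> v != x -> v != y ->
          deg e v = 2%N /\
          (forall w, e v w -> w != u -> (deg e w)%:R <= M)) /\
       (deg e x + deg e y)%:R <= k%:R - M + 2).
Proof.
move=> e0 e20 hk [esym eirr] hdeg Hnc Hmin M.
have HL_of : forall L : T -> seq nat,
   (forall v, v \in [set: T] -> uniq (L v) /\ size (L v) = k.+1) ->
   forall v, uniq (L v) /\ size (L v) = k.+1 := fun L H v => H v (in_setT v).
split; [|split].
- case=> u hu; apply: Hnc => L HL0; have HL := HL_of L HL0.
  pose S := [set: T] :\ u.
  have [c hc] : exists c, valid e L S c.
    apply: (@start T e esym L k.+1 S S Hmin HL).
    + by apply/eqP => /setP /(_ u); rewrite !inE eqxx.
    + exact: subxx.
    + move=> a b w aS bS nab eaw ewb; rewrite !inE andbT; apply/eqP => wu.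
      rewrite esym in eaw; subst w.
      by have := leq_trans (deg2_of eaw ewb nab) hu.
  have [c' hc'] : exists c', valid e L (u |: S) c'.
    apply: (extend esym (HL u).1 (HL u).2 hc).
    apply: leq_trans (sq_bound _ _ u) _.
    apply: leq_trans (_ : _ <= \sum_(a in nbr e u) k)%N _.
      by apply: leq_sum => a; rewrite inE => hua; apply: leq_trans (F_bound esym _ hua) (hdeg a).
    rewrite sum_nat_const; apply: leq_trans (leq_mul hu (leqnn k)) _.
    by rewrite mul1n.
  apply: (finish (A := u |: S)) hc' => z.
  by rewrite !inE; case: (z == u).
- case=> w1 [u1 [u2 [w2 [[hu e1 e2 e3] [d1 d2 dw1 dw2]]]]].
  apply: Hnc => L HL0; have HL := HL_of L HL0.
  move: hu; rewrite /= !inE !negb_or => hu.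
  case/and4P: hu => /and3P[n1 n2 n3] /andP[n4 n5] n6 _.
  have e1' : e u1 w1 by rewrite esym.
  have e2' : e u2 u1 by rewrite esym.
  have nb1 : forall a, e u1 a -> (a == w1) || (a == u2).
    move=> a h; apply/negPn/negP; rewrite negb_or => /andP[h1 h2].
    rewrite eq_sym in h1; rewrite eq_sym in h2.
    have := deg3_of e1' e2 h n2 h1 h2.
    by rewrite d1.
  have nb2 : forall a, e u2 a -> (a == u1) || (a == w2).
    move=> a h; apply/negPn/negP; rewrite negb_or => /andP[h1 h2].
    rewrite eq_sym in h1; rewrite eq_sym in h2.
    have := deg3_of e2' e3 h n5 h1 h2.
    by rewrite d2.
  pose S := [set: T] :\: [set u1; u2].
  have [c hc] : exists c, valid e L S c.
    apply: (@start T e esym L k.+1 S S Hmin HL).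
    + by apply/eqP => /setP /(_ u1); rewrite !inE eqxx.
    + exact: subxx.
    + move=> a b w aS bS nab eaw ewb.
      move: aS bS; rewrite !inE !andbT !negb_or => /andP[a1 a2] /andP[b1 b2].
      apply/andP; split; apply/eqP => ?; subst w.
      * rewrite esym in eaw.
        move: (nb1 _ eaw) (nb1 _ ewb); rewrite (negbTE a2) (negbTE b2) !orbF.
        by move=> /eqP ha /eqP hb; rewrite ha hb eqxx in nab.
      * rewrite esym in eaw.
        move: (nb2 _ eaw) (nb2 _ ewb); rewrite (negbTE a1) (negbTE b1) /=.
        by move=> /eqP ha /eqP hb; rewrite ha hb eqxx in nab.
  have N1 : nbr e u1 = [set w1; u2].
    apply/setP => z; rewrite !inE; apply/idP/idP; first exact: nb1.
    by case/orP => /eqP ->.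
  have N2 : nbr e u2 = [set u1; w2].
    apply/setP => z; rewrite !inE; apply/idP/idP; first exact: nb2.
    by case/orP => /eqP ->.
  have [c1 hc1] : exists c', valid e L (u1 |: S) c'.
    apply: (extend esym (HL u1).1 (HL u1).2 hc).
    apply: leq_trans (sq_bound _ _ u1) _.
    rewrite N1 big_setU1 ?inE //= big_set1.
    have h1 := F_bound esym S e1'.
    have h2 : (u2 \notin S) by rewrite !inE eqxx orbT.
    have h3 := F_bound_out esym e2 h2.
    apply: leq_trans (leq_add h1 h3) _; by rewrite d2.
  have [c2 hc2] : exists c', valid e L (u2 |: (u1 |: S)) c'.
    apply: (extend esym (HL u2).1 (HL u2).2 hc1).
    apply: leq_trans (sq_bound _ _ u2) _.
    rewrite N2 big_setU1 ?inE //= big_set1.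
    have h1 := F_bound esym (u1 |: S) e2'.
    have h3 := F_bound esym (u1 |: S) e3.
    apply: leq_trans (leq_add h1 h3) _; rewrite d1 addnC; exact: dw2.
  apply: (finish (A := u2 |: (u1 |: S))) hc2 => z.
  by rewrite !inE; case: (z == u2); case: (z == u1).
- case=> u [x [y [[du3 duM nxy eux euy] [Hv Hxy]]]].
  apply: Hnc => L HL0; have HL := HL_of L HL0.
  pose V := [set z | e u z && (z != x) && (z != y)].
  pose S := ~: V.
  pose A0 := S :\ u.
  have [v0 hv0] : exists v0, v0 \in V.
    apply/existsP; apply: contraLR du3 => /existsPn H.
    rewrite -ltnNge ltnS.
    apply: (@leq_trans #|[set x; y]|); last by rewrite cards2 nxy.
    apply: subset_leq_card; apply/subsetP => z; rewrite !inE => hz.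
    have := H z; rewrite !inE hz /= negb_and !negbK.
    by case/orP => ->; rewrite ?orbT.
  have [c hc] : exists c, valid e L A0 c.
    apply: (@start T e esym L k.+1 S A0 Hmin HL).
    + by apply/eqP => /setP /(_ v0); rewrite in_setC in_setT hv0.
    + exact: subsetDl.
    + move=> a b w aS bS nab eaw ewb.
      rewrite in_setC; apply/negP; rewrite inE => /andP[/andP[euw wx] wy].
      move: aS bS; rewrite !inE => /andP[au _] /andP[bu _].
      have [dw _] := Hv w euw wx wy.
      rewrite esym in eaw.
      have ewu : e w u by rewrite esym.
      have := deg3_of eaw ewb ewu nab au bu.
      by rewrite dw.
  have hnat : (deg e x + deg e y + deg e u <= k + 2)%N.
    rewrite -(ler_nat rat) !natrD.
    move: duM Hxy; rewrite natrD; lra.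
  have [c1 hc1] : exists c', valid e L (u |: A0) c'.
    apply: (extend esym (HL u).1 (HL u).2 hc).
    apply: leq_trans (sq_bound _ _ u) _.
    have xN : x \in nbr e u by rewrite inE.
    have yN : (y \in nbr e u) && (y != x) by rewrite inE euy eq_sym nxy.
    have Hc : (\sum_(i in nbr e u) 1 = #|nbr e u|)%N by rewrite sum1_card.
    rewrite (bigD1 x xN) (bigD1 y yN) /= in Hc.
    rewrite (bigD1 x xN) (bigD1 y yN) /=.
    have hx := F_bound esym A0 eux.
    have hy := F_bound esym A0 euy.
    set R1 := (\sum_(i | _) 1)%N in Hc.
    have hr : (\sum_(i | (i \in nbr e u) && (i != x) && (i != y))
                 #|(i |: (nbr e i :\ u)) :&: A0| <= R1)%N.
      apply: leq_sum => a /andP[/andP[hua hax] hay].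
      rewrite inE in hua.
      have [da _] := Hv a hua hax hay.
      have aA : a \notin A0 by rewrite !inE hua hax hay andbF.
      by apply: leq_trans (F_bound_out esym hua aA) _; rewrite da.
    move: hnat; rewrite /deg -/(nbr e u) -Hc.
    move: hx hy hr; rewrite /deg.
    set p := #|_|; set q := #|_|; set r := #|_|; set s := (\sum_(i | _) _)%N.
    move=> hx hy hr hn.
    apply: leq_trans (leq_add hx (leq_add hy hr)) _.
    move: hn; move: (#|[set w | e y w]|) => Y; clearbody q R1.
    clear -q; move=> hn; lia.
  have h2M : M *+ 2 <= k%:R by apply: eps_fact.
  have hb : forall v, v \in enum V -> (#|[set w | sq_adj [set: T] e v w]| <= k)%N.
    move=> v; rewrite mem_enum inE => /andP[/andP[huv hvx] hvy].
    have [dv Hw] := Hv v huv hvx hvy.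
    apply: leq_trans (subset_leq_card _) (leq_trans (sq_bound e [set: T] v) _).
      by apply/subsetP => z; rewrite !inE.
    apply: leq_trans (_ : _ <= \sum_(a in nbr e v) deg e a)%N _.
      apply: leq_sum => a; rewrite inE => hva. exact: (F_bound esym [set: T] hva).
    rewrite -(ler_nat rat) natr_sum.
    apply: le_trans (_ : _ <= \sum_(a in nbr e v) M) _.
      apply: ler_sum => a; rewrite inE => hva.
      case: (eqVneq a u) => [->|nau]; first exact: duM.
      exact: (Hw a hva nau).
    rewrite sumr_const; move: dv; rewrite /deg -/(nbr e v) => ->; exact: h2M.
  have [c2 hc2] := extend_seq esym HL hc1 hb.
  apply: (finish (A := (u |: A0) :|: [set z in enum V])) hc2 => z.
  rewrite !inE mem_enum !inE.
  by case: (z == u); case: (e u z); case: (z == x); case: (z == y).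
Qed.
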